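(* Let $\Delta\in\mathbb F^{m\times m}$ be a connection matrix with column/row partition $J_0,\dots,J_b$. Let $\Delta^0,\dots,\Delta^m$ be produced by the Incremental Sweeping Algorithm (ISA) applied to $\Delta$ and $\widetilde\Delta^0,\dots,\widetilde\Delta^{m-1}$ by the Row Cancellation Algorithm (RCA) applied to $\Delta$. Then for every $r=1,\dots,m-1$, the set of positions marked as primary pivots at iteration $r$ is the same in both algorithms, and for every position $(i,j)$ marked as a primary pivot at some iteration $\le r$ one has $\Delta^r_{ij}=\widetilde\Delta^r_{ij}$.
   Context: Throughout, $\mathbb F$ is a field and $m\ge1$. $U^{pq}$ is the $m\times m$ matrix whose only nonzero entry is a $1$ in position $(p,q)$. Superscripts on matrices are indices, not powers. A connection matrix (over $\mathbb F$) is a matrix $\Delta\in\mathbb F^{m\times m}$ together with a partition $\{1,\dots,m\}=J_0\sqcup\cdots\sqcup J_b$ (the column/row partition; the $J_k$ need not consist of consecutive integers) such that $\Delta$ is upper triangular, $\Delta\Delta=0$, and $\Delta_{ij}=0$ unless $i<j$ and $(i,j)\in\bigcup_{k=1}^bJ_{k-1}\times J_k$. For $1\le r\le m-1$ the $r$-th diagonal is $\{(j-r,j):r<j\le m\}$. Incremental Sweeping Algorithm (ISA) applied to a connection matrix $\Delta$: set $\Delta^0=\Delta^1=\Delta$. For $r=1,\dots,m-1$ in turn: (Markup) for every position $(j-r,j)$ on the $r$-th diagonal with $\Delta^r_{j-r,j}\ne0$ such that no position in column $j$ was marked as a primary pivot at an earlier iteration: if some position $(j-r,p)$ of row $j-r$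 was marked as a primary pivot at an earlier iteration, mark $(j-r,j)$ as a change-of-basis pivot of iteration $r$; otherwise mark $(j-r,j)$ permanently as a primary pivot (marked at iteration $r$). (Update) Let $T^r=I-\sum \frac{\Delta^r_{j-r,j}}{\Delta^r_{j-r,p}}U^{pj}$, the sum running over all change-of-basis pivots $(j-r,j)$ of iteration $r$, where $(j-r,p)$ is the primary pivot position in row $j-r$; set $\Delta^{r+1}=(T^r)^{-1}\Delta^rT^r$. Row Cancellation Algorithm (RCA) applied to a connection matrix $\Delta$: set $\widetilde\Delta^0=\widetilde\Delta^1=\Delta$. For $r=1,\dots,m-1$ in turn: (Markup) mark permanently as a primary pivot (marked at iteration $r$) every position $(j-r,j)$ on the $r$-th diagonal with $\widetilde\Delta^r_{j-r,j}\ne0$ such that no position of column $j$ was marked as a primary pivot at an earlier iteration. (Update, only for $r\le m-2$) If no position was marked at iteration $r$, put $\widetilde T^r=I$; otherwise let $j_1<\cdots<j_t$ be the columns of the positions marked at iteration $r$, let $\widetilde T^{r,s}=I-\sum_{q=j_s+1}^m\frac{\widetilde\Delta^r_{j_s-r,q}}{\widetilde\Delta^r_{j_s-r,j_s}}U^{j_sq}$ and $\widetilde T^r=\widetilde T^{r,1}\cdots\widetilde T^{r,t}$. Set $\widetilde\Delta^{r+1}=(\widetilde T^r)^{-1}\widetilde\Delta^r\widetilde T^r$. *)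

(* Defs.v *)
From HB Require Import structures.
From mathcomp Require Import all_boot all_order all_algebra.
Set Implicit Arguments. Unset Strict Implicit. Unset Printing Implicit Defensive.
Import Order.TTheory GRing.Theory Num.Theory.
Local Open Scope ring_scope.

(* Indices are 0-based ('I_m); the r-th diagonal is {(i,j) | j = i + r}.     *)
(* A marking function mk : 'I_m -> 'I_m -> nat records primary pivots:       *)
(* mk i j = 0 means (i,j) is not a primary pivot, mk i j = k > 0 means it was *)
(* marked as a primary pivot at iteration k.                                  *)

Section Algorithms.
Variables (F : fieldType) (m : nat).

Definition marking := 'I_m -> 'I_m -> nat.
Definition no_marks : marking := fun _ _ => 0%N.

Definition on_diag (r : nat) (i j : 'I_m) : bool := (i + r)%N == j.

Definition col_free (mk : marking) (j : 'I_m) : bool := [forall i, mk i j == 0%N].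
Definition row_has_pivot (mk : marking) (i : 'I_m) : bool := [exists p, mk i p != 0%N].
Definition pivot_col (mk : marking) (i : 'I_m) : 'I_m := odflt i [pick p | mk i p != 0%N].

Definition isa_cand r (D : 'M[F]_m) mk i j :=
  [&& on_diag r i j, D i j != 0 & col_free mk j].
Definition isa_primary r D mk i j := isa_cand r D mk i j && ~~ row_has_pivot mk i.
Definition isa_cob r D mk i j := isa_cand r D mk i j && row_has_pivot mk i.

Definition isa_T r (D : 'M[F]_m) (mk : marking) : 'M[F]_m :=
  1%:M - \sum_(i : 'I_m) \sum_(j : 'I_m | isa_cob r D mk i j)
           (D i j / D i (pivot_col mk i)) *: delta_mx (pivot_col mk i) j.

Definition isa_step r (st : 'M[F]_m * marking) : 'M[F]_m * marking :=
  let: (D, mk) := st in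
  let T := isa_T r D mk in
  (invmx T *m D *m T,
   fun i j => if mk i j != 0%N then mk i j
              else if isa_primary r D mk i j then r else 0%N).

(* isa D n = (Delta^{n+1}, primary-pivot marks of iterations 1..n) *)
Fixpoint isa (D : 'M[F]_m) (n : nat) : 'M[F]_m * marking :=
  match n with
  | 0 => (D, no_marks)
  | n'.+1 => isa_step n'.+1 (isa D n')
  end.

(* Delta^r, for r >= 1 *)
Definition isa_mx (D : 'M[F]_m) (r : nat) : 'M[F]_m := (isa D r.-1).1.
Definition isa_marks (D : 'M[F]_m) (r : nat) : marking := (isa D r).2.

Definition rca_primary r (D : 'M[F]_m) mk i j :=
  [&& on_diag r i j, D i j != 0 & col_free mk j].

Definition rca_Tcol r (D : 'M[F]_m) mk (j : 'I_m) : 'M[F]_m :=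
  1%:M - \sum_(i : 'I_m | rca_primary r D mk i j) \sum_(q : 'I_m | (j < q)%N)
           (D i q / D i j) *: delta_mx j q.

(* product over the marked columns j_1 < ... < j_t, in increasing order *)
Definition rca_T r (D : 'M[F]_m) mk : 'M[F]_m :=
  \big[mulmx/1%:M]_(j : 'I_m | [exists i, rca_primary r D mk i j]) rca_Tcol r D mk j.

Definition rca_step r (st : 'M[F]_m * marking) : 'M[F]_m * marking :=
  let: (D, mk) := st in
  let T := rca_T r D mk in
  (invmx T *m D *m T,
   fun i j => if mk i j != 0%N then mk i j
              else if rca_primary r D mk i j then r else 0%N).

Fixpoint rca (D : 'M[F]_m) (n : nat) : 'M[F]_m * marking :=
  match n with
  | 0 => (D, no_marks)
  | n'.+1 => rca_step n'.+1 (rca D n')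
  end.

(* tilde Delta^r, for 1 <= r <= m-1 (uses only updates 1..r-1 <= m-2) *)
Definition rca_mx (D : 'M[F]_m) (r : nat) : 'M[F]_m := (rca D r.-1).1.
Definition rca_marks (D : 'M[F]_m) (r : nat) : marking := (rca D r).2.

(* part i = k means i belongs to J_k, k = 0..b *)
Definition is_connection_matrix (b : nat) (D : 'M[F]_m) (part : 'I_m -> 'I_b.+1) : Prop :=
  [/\ (forall k : 'I_b.+1, exists i : 'I_m, part i = k),
      (forall i j : 'I_m, (j < i)%N -> D i j = 0),
      D *m D = 0
    & (forall i j : 'I_m, D i j != 0 ->
         (i < j)%N /\ (nat_of_ord (part j) = (part i).+1)%N)].

End Algorithms.

(* Main.v *)
Require Import Defs.
From HB Require Import structures.
From mathcomp Require Import all_boot all_order all_algebra zify.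
Set Implicit Arguments. Unset Strict Implicit. Unset Printing Implicit Defensive.
Import Order.TTheory GRing.Theory Num.Theory.
Local Open Scope ring_scope.



Definition utri (F : fieldType) (m : nat) (A : 'M[F]_m) :=
  (forall a, A a a = 1) /\ (forall a b : 'I_m, (b < a)%N -> A a b = 0).

Lemma ordgtF (m : nat) (a b : 'I_m) : (b < a)%N -> (a == b) = false.
Proof. by move=> ba; apply/eqP => E; rewrite E ltnn in ba. Qed.
Lemma ordltF (m : nat) (a b : 'I_m) : (a < b)%N -> (a == b) = false.
Proof. by move=> ba; apply/eqP => E; rewrite E ltnn in ba. Qed.

Lemma mulmx_utri_r (F : fieldType) (n m : nat) (Y : 'M[F]_(n, m)) (X : 'M[F]_m) a b :
  utri X -> (Y *m X) a b = Y a b + \sum_(k < m | (k < b)%N) Y a k * X k b.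
Proof.
case=> Xd Xl; rewrite mxE (bigD1 b) //= Xd mulr1; congr (_ + _).
rewrite (bigID (fun k : 'I_m => (k < b)%N)) /= [X in _ + X]big1 ?addr0.
  by apply: eq_bigl => k; rewrite andb_idl // => kb; apply/eqP => kE; by rewrite kE ltnn in kb.
move=> k /andP[kb]; rewrite -leqNgt => bk; rewrite Xl ?mulr0 //.
by rewrite ltn_neqAle bk andbT eq_sym; exact: kb.
Qed.

Lemma mulmx_utri_l (F : fieldType) (m : nat) (X Y : 'M[F]_m) a b :
  utri X -> (X *m Y) a b = Y a b + \sum_(k < m | (a < k)%N) X a k * Y k b.
Proof.
case=> Xd Xl; rewrite mxE (bigD1 a) //= Xd mul1r; congr (_ + _).
rewrite (bigID (fun k : 'I_m => (a < k)%N)) /= [X in _ + X]big1 ?addr0.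
  by apply: eq_bigl => k; rewrite andb_idl // => kb; apply/eqP => kE; by rewrite kE ltnn in kb.
move=> k /andP[ka]; rewrite -leqNgt => kl; rewrite Xl ?mul0r //.
by rewrite ltn_neqAle kl andbT; exact: ka.
Qed.

Lemma utri_mul (F : fieldType) (m : nat) (X Y : 'M[F]_m) :
  utri X -> utri Y -> utri (X *m Y).
Proof.
move=> uX uY; split.
  move=> a; rewrite mulmx_utri_r // big1 ?addr0; first by case: uX.
  by move=> k ka; rewrite uX.2 // mul0r.
move=> a b ba; rewrite mulmx_utri_r // uX.2 // add0r big1 // => k kb.
by rewrite uX.2 ?mul0r // (ltn_trans kb ba).
Qed.

Lemma utri_unit (F : fieldType) (m : nat) (X : 'M[F]_m) : utri X -> X \in unitmx.
Proof.
move=> [Xd Xl]; rewrite unitmxE -det_tr det_trig.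
  by rewrite big1 ?unitr1 // => i _; rewrite mxE Xd.
by apply/is_trig_mxP => i j ij; rewrite mxE Xl.
Qed.

Lemma utri_inv (F : fieldType) (m : nat) (X : 'M[F]_m) : utri X -> utri (invmx X).
Proof.
move=> uX; have XU := utri_unit uX; set B := invmx X.
have BX : B *m X = 1%:M by rewrite mulVmx.
have BXe : forall a b, B a b + \sum_(k < m | (k < b)%N) B a k * X k b = (a == b)%:R.
  by move=> a b; rewrite -mulmx_utri_r // BX mxE.
have low : forall a b : 'I_m, (b < a)%N -> B a b = 0.
  suff H : forall n (b : 'I_m), (b <= n)%N -> forall a : 'I_m, (b < a)%N -> B a b = 0.
    by move=> a b; apply: (H b).
  elim=> [|n IH] b bn a ba; have := BXe a b; rewrite big1 ?addr0.
  - by move=> ->; rewrite ordgtF.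
  - by move=> k kb; move: bn; rewrite leqn0 => /eqP bz; rewrite bz in kb.
  - by move=> ->; rewrite ordgtF.
  - move=> k kb; rewrite (IH k) ?mul0r //; last exact: ltn_trans kb ba.
    by rewrite -ltnS (leq_trans kb bn).
split=> // a; have := BXe a a; rewrite big1 ?addr0 ?eqxx // => k ka.
by rewrite low ?mul0r.
Qed.



Definition lowin (F : fieldType) (m : nat) (M : 'M[F]_m) (c a : 'I_m) :=
  M a c != 0 /\ (forall a' : 'I_m, (a < a')%N -> M a' c = 0).
Definition colz (F : fieldType) (m : nat) (i0 : nat) (M : 'M[F]_m) (c : 'I_m) :=
  forall a : 'I_m, (i0 <= a)%N -> M a c = 0.
Definition distinct (F : fieldType) (m : nat) (i0 j0 : nat) (M : 'M[F]_m) :=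
  forall c1 c2 a : 'I_m, (c1 <= j0)%N -> (c2 <= j0)%N -> (i0 <= a)%N ->
    lowin M c1 a -> lowin M c2 a -> c1 = c2.

Lemma BX_below (F : fieldType) (m : nat) (B X : 'M[F]_m) (c : 'I_m) (s : nat) :
  utri B -> (forall b : 'I_m, (s <= b)%N -> X b c = 0) ->
  forall b : 'I_m, (s <= b)%N -> (B *m X) b c = 0.
Proof.
move=> uB Xz b sb; rewrite mulmx_utri_l // Xz // add0r big1 // => k bk.
by rewrite Xz ?mulr0 // (leq_trans sb (ltnW bk)).
Qed.

Lemma BX_at (F : fieldType) (m : nat) (B X : 'M[F]_m) (c a : 'I_m) :
  utri B -> (forall b : 'I_m, (a < b)%N -> X b c = 0) -> (B *m X) a c = X a c.
Proof.
move=> uB Xz; rewrite mulmx_utri_l // big1 ?addr0 // => k ak.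
by rewrite Xz ?mulr0.
Qed.

Lemma low_step (F : fieldType) (m : nat) (i0 j0 : nat) (B X Y : 'M[F]_m) (c : 'I_m) :
  utri B -> Y *m B = B *m X -> distinct i0 j0 X -> distinct i0 j0 Y -> (c <= j0)%N ->
  (forall k a : 'I_m, (k < c)%N -> (i0 <= a)%N -> lowin Y k a -> lowin X k a) ->
  (forall a : 'I_m, (i0 <= a)%N -> lowin X c a -> lowin Y c a /\ Y a c = X a c) /\
  (colz i0 X c -> colz i0 Y c).
Proof.
move=> uB YB dX dY cj IH.
have YE : forall b, Y b c = (B *m X) b c - \sum_(k < m | (k < c)%N) Y b k * B k c.
  by move=> b; rewrite -YB mulmx_utri_r // addrK.
have key : forall t : nat, (i0 <= t)%N ->
  (forall b : 'I_m, (t < b)%N -> (B *m X) b c = 0) ->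
  (forall b : 'I_m, (val b == t) -> (B *m X) b c = 0 \/ (forall k : 'I_m, (k < c)%N -> lowin Y k b -> False)) ->
  forall b : 'I_m, (t <= b)%N -> forall k : 'I_m, (k < c)%N -> B k c != 0 -> Y b k = 0.
  move=> t it BXz hk.
  suff H : forall d (b : 'I_m), (m <= b + d)%N -> (t <= b)%N ->
      forall k : 'I_m, (k < c)%N -> B k c != 0 -> Y b k = 0 by move=> b; apply: (H m b); rewrite leq_addl.
  elim=> [|d IHd] b bd tb k kc Bk.
    by move: bd; rewrite addn0 leqNgt ltn_ord.
  have below : forall b' : 'I_m, (b < b')%N -> forall k : 'I_m, (k < c)%N -> B k c != 0 -> Y b' k = 0.
    move=> b' bb' k' k'c Bk'; apply: IHd => //; last exact: leq_trans tb (ltnW bb').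
    by rewrite (leq_trans bd) // addnS ltn_add2r.
  apply/eqP; apply: contraT => Ybk.
  have lowk : lowin Y k b by split=> // a' ba'; apply: below.
  have sumb : forall b' : 'I_m, (b <= b')%N ->
      \sum_(k' < m | (k' < c)%N) Y b' k' * B k' c = if b' == b then Y b k * B k c else 0.
    move=> b' bb'; case: eqP => [->|neb].
      rewrite (bigD1 k) //= big1 ?addr0 // => k' /andP[k'c nk'].
      have [->|Bk'] := eqVneq (B k' c) 0; first by rewrite mulr0.
      have [->|Ybk'] := eqVneq (Y b k') 0; first by rewrite mul0r.
      have lowk' : lowin Y k' b by split=> // a' ba'; apply: below.
      move: nk'; rewrite (dY k' k b) ?eqxx //.
        by rewrite (leq_trans (ltnW k'c)).
      by rewrite (leq_trans (ltnW kc)).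
      exact: leq_trans it tb.
    rewrite big1 // => k' k'c; have [->|Bk'] := eqVneq (B k' c) 0; first by rewrite mulr0.
    rewrite below ?mul0r //; rewrite ltn_neqAle bb' andbT; apply/eqP => E; apply: neb; exact: val_inj.
  have [BXb|hkb] : (B *m X) b c = 0 \/ (forall k : 'I_m, (k < c)%N -> lowin Y k b -> False).
      have [tb'|bt] := ltnP t b; first by left; apply: BXz.
      by apply: hk; rewrite eqn_leq bt tb.
    have lowc : lowin Y c b.
      split.
        by rewrite YE BXb (sumb b (leqnn b)) eqxx sub0r oppr_eq0 mulf_neq0.
      move=> a' ba'.
      have nab : (a' == b) = false by apply: ordgtF.
      by rewrite YE (BXz a' (leq_ltn_trans tb ba')) (sumb a' (ltnW ba')) nab subr0.
    have := dY c k b cj (leq_trans (ltnW kc) cj) (leq_trans it tb) lowc lowk.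
    by move=> E; rewrite E ltnn in kc.
  by case: (hkb k kc lowk).
have Yeq : forall t : nat, (i0 <= t)%N ->
  (forall b : 'I_m, (t <= b)%N -> forall k : 'I_m, (k < c)%N -> B k c != 0 -> Y b k = 0) ->
  forall b : 'I_m, (t <= b)%N -> Y b c = (B *m X) b c.
  move=> t it Z b tb; rewrite YE big1 ?subr0 // => k kc.
  by have [->|Bk] := eqVneq (B k c) 0; [rewrite mulr0 | rewrite (Z b tb k kc Bk) mul0r].
split.
  move=> a ia [Xa Xb].
  have BXz : forall b : 'I_m, (a < b)%N -> (B *m X) b c = 0 by apply: BX_below.
  have Z := key a ia BXz.
  have Z' : forall b : 'I_m, (a <= b)%N -> forall k : 'I_m, (k < c)%N -> B k c != 0 -> Y b k = 0.
    apply: Z => b /eqP bE; right => k kc lk.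
    have ib : (i0 <= b)%N by rewrite bE.
    have lk' := IH k b kc ib lk.
    have bEa : b = a by apply: val_inj.
    rewrite bEa in lk'.
    have := dX k c a (leq_trans (ltnW kc) cj) cj ia lk' (conj Xa Xb).
    by move=> E; rewrite E ltnn in kc.
  have YX := Yeq a ia Z'.
  have Yac : Y a c = X a c by rewrite YX // BX_at.
  split=> //; split; first by rewrite Yac.
  by move=> a' aa'; rewrite YX ?(ltnW aa') // (BX_below _ Xb).
move=> Xz.
have BXz : forall b : 'I_m, (i0 <= b)%N -> (B *m X) b c = 0 by apply: BX_below.
have Z : forall b : 'I_m, (i0 <= b)%N -> forall k : 'I_m, (k < c)%N -> B k c != 0 -> Y b k = 0.
  apply: key (leqnn i0) _ _ => [b ib|b /eqP bE]; first exact: BXz (ltnW ib).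
  by left; apply: BXz; rewrite bE.
move=> b ib; by rewrite (Yeq i0 (leqnn _) Z b ib) BXz.
Qed.


Lemma low_eq (F : fieldType) (m : nat) (i0 j0 : nat) (A M1 M2 : 'M[F]_m) :
  utri A -> M2 *m A = A *m M1 -> distinct i0 j0 M1 -> distinct i0 j0 M2 ->
  forall c : 'I_m, (c <= j0)%N ->
  (forall a : 'I_m, (i0 <= a)%N -> lowin M1 c a -> lowin M2 c a /\ M2 a c = M1 a c) /\
  (colz i0 M1 c -> colz i0 M2 c).
Proof.
move=> uA E d1 d2.
have uA' := utri_inv uA; have AU := utri_unit uA.
have E' : M1 *m invmx A = invmx A *m M2.
  have : invmx A *m (M2 *m A) *m invmx A = invmx A *m (A *m M1) *m invmx A by rewrite E.
  by rewrite !mulmxA mulVmx // mul1mx -!mulmxA mulmxV // mulmx1.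
suff H : forall n (c : 'I_m), (c <= n)%N -> (c <= j0)%N ->
  ((forall a : 'I_m, (i0 <= a)%N -> lowin M1 c a -> lowin M2 c a /\ M2 a c = M1 a c) /\
   (colz i0 M1 c -> colz i0 M2 c)) /\
  ((forall a : 'I_m, (i0 <= a)%N -> lowin M2 c a -> lowin M1 c a /\ M1 a c = M2 a c) /\
   (colz i0 M2 c -> colz i0 M1 c)).
  by move=> c cj; case: (H c c (leqnn _) cj).
elim=> [|n IHn] c cn cj.
  move: cn; rewrite leqn0 => /eqP c0.
  have nk : forall k : 'I_m, (k < c)%N -> False by move=> k; rewrite c0.
  split; [apply: (low_step uA E d1 d2 cj) | apply: (low_step uA' E' d2 d1 cj)];
    by move=> k a kc; case: (nk k kc).
have IHk := fun (k : 'I_m) (kc : (k < c)%N) =>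
  IHn k (leq_trans kc cn : (k <= n)%N) (leq_trans (ltnW kc) cj).
split; [apply: (low_step uA E d1 d2 cj) | apply: (low_step uA' E' d2 d1 cj)] => k a kc ia lk.
  by case: ((IHk k kc).2.1 a ia lk).
by case: ((IHk k kc).1.1 a ia lk).
Qed.

Lemma corner_eq (F : fieldType) (m : nat) (A M1 M2 : 'M[F]_m) (i0 j0 : 'I_m) :
  utri A -> M2 *m A = A *m M1 -> distinct i0 j0 M1 -> distinct i0 j0 M2 ->
  (forall a : 'I_m, (i0 < a)%N -> M1 a j0 = 0) ->
  M1 i0 j0 = M2 i0 j0.
Proof.
move=> uA E d1 d2 z1.
have [L Z] := low_eq uA E d1 d2 (leqnn j0).
have [nz|z] := eqVneq (M1 i0 j0) 0.
  have cz : colz i0 M1 j0.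
    move=> a; rewrite leq_eqVlt => /orP[/eqP ia|ia]; last exact: z1.
    by have -> : a = i0 by apply: val_inj.
  by rewrite nz (Z cz i0 (leqnn _)).
by case: (L i0 (leqnn _) (conj z z1)) => _ ->.
Qed.



Section Algo.
Variables (F : fieldType) (m : nat).
Implicit Types (M N : 'M[F]_m) (mk : marking m).

Lemma col_freeP mk j : reflect (forall i, mk i j = 0%N) (col_free mk j).
Proof.
apply: (iffP forallP) => H i; first exact/eqP.
by rewrite H.
Qed.

Lemma pc_spec mk i : row_has_pivot mk i -> mk i (pivot_col mk i) != 0%N.
Proof.
by case/existsP=> p hp; rewrite /pivot_col; case: pickP => [q ->|/(_ p)]; rewrite ?hp.
Qed.

Lemma row_has_pivotP mk i p : mk i p != 0%N -> row_has_pivot mk i.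
Proof. by move=> h; apply/existsP; exists p. Qed.

Definition Inv M mk (r : nat) :=
 [/\ (forall j : 'I_m, col_free mk j -> forall a : 'I_m, (j < a + r)%N -> M a j = 0),
     (forall i p, mk i p != 0%N -> M i p != 0 /\ forall a : 'I_m, (i < a)%N -> M a p = 0),
     (forall i p, mk i p != 0%N -> (i + mk i p)%N = p /\ (0 < mk i p < r)%N),
     (forall i p q, mk i p != 0%N -> mk i q != 0%N -> p = q) &
     (forall i i' p, mk i p != 0%N -> mk i' p != 0%N -> i = i')].

Lemma Inv_lowpos M mk r (i0 j0 c a : 'I_m) : Inv M mk r -> (j0 <= i0 + r)%N ->
  (c <= j0)%N -> (i0 <= a)%N -> lowin M c a ->
  (c = j0 /\ col_free mk c) \/ mk a c != 0%N.
Proof.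
case=> Ia Ib Ic Ir Icl jr cj ia [Mac Mb].
have [cf|ncf] := boolP (col_free mk c).
  left; split=> //; apply: val_inj; apply/eqP; rewrite eqn_leq cj /=.
  rewrite leqNgt; apply/negP => cj'; move: Mac; rewrite Ia ?eqxx //.
  by rewrite (leq_trans cj') // (leq_trans jr) // leq_add2r.
right; move/forallPn: ncf => [i /= hi].
have [Mic Mib] := Ib i c hi.
have ai : a = i.
  apply: val_inj; apply/eqP; rewrite eqn_leq; apply/andP; split.
    by rewrite leqNgt; apply/negP => ia'; move: Mac; rewrite Mib ?eqxx.
  by rewrite leqNgt; apply/negP => ia'; move: Mic; rewrite Mb ?eqxx.
by rewrite ai.
Qed.

Lemma Inv_distinct M mk r (i0 j0 : 'I_m) : Inv M mk r -> (j0 <= i0 + r)%N ->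
  (forall p, mk i0 p != 0%N -> p = j0) -> distinct i0 j0 M.
Proof.
move=> I jr hrow c1 c2 a c1j c2j ia l1 l2.
have I' := I; case: I' => Ia Ib Ic Ir Icl.
have mixed : forall c : 'I_m, lowin M j0 a -> col_free mk j0 -> mk a c != 0%N -> False.
  move=> c [Maj _] fj hac.
  have ai : a = i0.
    apply: val_inj; apply/eqP; rewrite eqn_leq ia andbT leqNgt; apply/negP => ia'.
    by move: Maj; rewrite Ia ?eqxx // (leq_ltn_trans jr) // ltn_add2r.
  rewrite ai in hac; have cj := hrow c hac.
  by move/col_freeP: fj => /(_ i0); rewrite -cj; move/eqP: hac.
case: (Inv_lowpos I jr c1j ia l1) => [[e1 f1]|h1];
  case: (Inv_lowpos I jr c2j ia l2) => [[e2 f2]|h2].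
- by rewrite e1 e2.
- by case: (mixed c2); rewrite -?e1.
- by case: (mixed c1); rewrite -?e2.
- exact: Ir h1 h2.
Qed.

Lemma Inv_below M mk r (i0 j0 : 'I_m) : Inv M mk r -> (j0 <= i0 + r)%N ->
  (col_free mk j0 \/ mk i0 j0 != 0%N) -> forall a : 'I_m, (i0 < a)%N -> M a j0 = 0.
Proof.
case=> Ia Ib _ _ _ jr [fj|h] a ia.
  by apply: Ia => //; rewrite (leq_ltn_trans jr) // ltn_add2r.
exact: (Ib _ _ h).2.
Qed.

Lemma sumd1 (G : 'I_m -> F) (p : 'I_m) : \sum_k G k * (k == p)%:R = G p.
Proof.
rewrite (bigD1 p) //= eqxx mulr1 big1 ?addr0 // => k kp.
by rewrite (negPf kp) mulr0.
Qed.

Lemma sumd2 (P : pred 'I_m) (G : 'I_m -> F) (x : bool) (b : 'I_m) :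
  \sum_(j | P j) G j * (x && (b == j))%:R = if P b then G b * x%:R else 0.
Proof.
case: ifP => Pb.
  rewrite (bigD1 b) //= eqxx andbT big1 ?addr0 // => j /andP[_ jb].
  by rewrite eq_sym (negPf jb) andbF mulr0.
by rewrite big1 // => j Pj; case: eqP => [bj|]; [rewrite bj Pj in Pb | rewrite andbF mulr0].
Qed.

Lemma conj_entry (T M : 'M[F]_m) a b : utri T ->
  (invmx T *m M *m T) a b = (M *m T) a b + \sum_(k < m | (a < k)%N) invmx T a k * (M *m T) k b.
Proof. by move=> uT; rewrite -mulmxA (@mulmx_utri_l _ _ (invmx T) (M *m T) a b (utri_inv uT)). Qed.

Lemma conj_zero (T M : 'M[F]_m) (j : 'I_m) (s : nat) : utri T ->
  (forall a : 'I_m, (s <= a)%N -> (M *m T) a j = 0) ->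
  forall a : 'I_m, (s <= a)%N -> (invmx T *m M *m T) a j = 0.
Proof.
move=> uT Z a sa; rewrite conj_entry // Z // add0r big1 // => k ak.
by rewrite Z ?mulr0 // (leq_trans sa (ltnW ak)).
Qed.

Lemma conj_keep (T M : 'M[F]_m) (i p : 'I_m) : utri T ->
  (forall a : 'I_m, (i <= a)%N -> (M *m T) a p = M a p) ->
  (forall a : 'I_m, (i < a)%N -> M a p = 0) ->
  forall a : 'I_m, (i <= a)%N -> (invmx T *m M *m T) a p = M a p.
Proof.
move=> uT K Z a ia; rewrite conj_entry // K // big1 ?addr0 // => k ak.
by rewrite K ?Z ?mulr0 // ?(leq_ltn_trans ia ak) // (leq_trans ia (ltnW ak)).
Qed.

Lemma isaE_entry r M mk k b :
  (\sum_(i : 'I_m) \sum_(j : 'I_m | isa_cob r M mk i j)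
      (M i j / M i (pivot_col mk i)) *: delta_mx (pivot_col mk i) j : 'M[F]_m) k b =
  \sum_(i | isa_cob r M mk i b) (M i b / M i (pivot_col mk i)) * (k == pivot_col mk i)%:R.
Proof.
rewrite summxE [RHS]big_mkcond; apply: eq_bigr => i _.
rewrite summxE (eq_bigr (fun j => (M i j / M i (pivot_col mk i)) * ((k == pivot_col mk i) && (b == j))%:R)).
  exact: sumd2.
by move=> j _; rewrite !mxE.
Qed.

Lemma isa_NE r M mk a b : (M *m isa_T r M mk) a b =
  M a b - \sum_(i | isa_cob r M mk i b) (M i b / M i (pivot_col mk i)) * M a (pivot_col mk i).
Proof.
rewrite /isa_T mulmxBr mulmx1 !mxE; congr (_ - _).
transitivity (\sum_(k : 'I_m) \sum_(i | isa_cob r M mk i b)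
   M a k * ((M i b / M i (pivot_col mk i)) * (k == pivot_col mk i)%:R)).
  by apply: eq_bigr => k _; rewrite isaE_entry mulr_sumr.
rewrite exchange_big /=; apply: eq_bigr => i _.
rewrite -(sumd1 (fun k => (M i b / M i (pivot_col mk i)) * M a k)).
by apply: eq_bigr => k _; rewrite mulrCA mulrA.
Qed.


Lemma sum_unique (P : pred 'I_m) (G : 'I_m -> F) (i0 : 'I_m) :
  P i0 -> (forall i, P i -> i = i0) -> \sum_(i | P i) G i = G i0.
Proof.
move=> P0 U; rewrite (bigD1 i0) //= big1 ?addr0 // => i /andP[Pi ni].
by move: ni; rewrite (U i Pi) eqxx.
Qed.

Lemma on_diagE r (i j : 'I_m) : on_diag r i j = (i + r == j)%N.
Proof. by []. Qed.

Lemma cob_unique r M mk b i i' : isa_cob r M mk i b -> isa_cob r M mk i' b -> i' = i.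
Proof.
move=> /andP[/and3P[/eqP d1 _ _] _] /andP[/and3P[/eqP d2 _ _] _].
apply: val_inj => /=; lia.
Qed.

Lemma cob_facts r M mk (i b : 'I_m) : Inv M mk r -> isa_cob r M mk i b ->
  [/\ (i + r)%N = b, mk i (pivot_col mk i) != 0%N, (pivot_col mk i < b)%N,
      col_free mk b & M i b != 0].
Proof.
move=> [_ _ Ic _ _] /andP[/and3P[/eqP d Mib cf] rp].
have hp := pc_spec rp; have [e /andP[_ lt]] := Ic _ _ hp.
split=> //; lia.
Qed.

Lemma isaT_entry r M mk k b : isa_T r M mk k b =
  (k == b)%:R - \sum_(i | isa_cob r M mk i b) (M i b / M i (pivot_col mk i)) * (k == pivot_col mk i)%:R.
Proof. by rewrite /isa_T !mxE isaE_entry. Qed.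

Lemma isaT_utri r M mk : Inv M mk r -> utri (isa_T r M mk).
Proof.
move=> I; split=> [a|a b ba]; rewrite isaT_entry.
  rewrite eqxx big1 ?subr0 // => i ci; have [_ _ lt _ _] := cob_facts I ci.
  by rewrite ordgtF ?mulr0.
rewrite ordgtF // sub0r big1 ?oppr0 // => i ci; have [_ _ lt _ _] := cob_facts I ci.
by rewrite ordgtF ?mulr0 // (ltn_trans lt ba).
Qed.

Lemma mk_step_nz (mk : marking m) (P : 'I_m -> 'I_m -> bool) r i j :
  (0 < r)%N ->
  ((if mk i j != 0%N then mk i j else if P i j then r else 0%N) != 0%N) =
  (mk i j != 0%N) || ((mk i j == 0%N) && P i j).
Proof.
move=> r0; case: (mk i j =P 0%N) => [->|/eqP nz] /=; last by rewrite nz.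
by case: (P i j) => //=; rewrite -lt0n.
Qed.

Lemma col_free_step (mk : marking m) (P : 'I_m -> 'I_m -> bool) r j :
  (0 < r)%N ->
  col_free (fun i j => if mk i j != 0%N then mk i j else if P i j then r else 0%N) j ->
  col_free mk j /\ (forall i, ~~ P i j).
Proof.
move=> r0 /col_freeP H; split.
  by apply/col_freeP => i; move: (H i); case: (mk i j).
move=> i; move: (H i); case: (mk i j) => [|k] //=.
by case: (P i j) => // e; rewrite e in r0.
Qed.

Lemma isa_N_free r M mk (j : 'I_m) : (0 < r)%N -> Inv M mk r ->
  col_free mk j -> (forall i, ~~ isa_primary r M mk i j) ->
  forall a : 'I_m, (j < a + r.+1)%N -> (M *m isa_T r M mk) a j = 0.
Proof.
move=> r0 I fj np a ja; have I' := I; case: I' => Ia Ib Ic Ir Icl.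
rewrite isa_NE.
case: (boolP [exists i, isa_cob r M mk i j]) => [/existsP [i0 c0] | /existsPn nc].
  rewrite (@sum_unique (fun i => isa_cob r M mk i j) _ _ c0 (fun i ci => cob_unique c0 ci)).
  have [d hp plt _ Mij] := cob_facts I c0.
  have [Mip Mbelow] := Ib _ _ hp.
  have [ai|ai] : a = i0 \/ (i0 < a)%N.
    have : (i0 <= a)%N by lia.
    rewrite leq_eqVlt => /orP[/eqP e|]; [left; apply: val_inj; by []|by right].
    by rewrite ai divfK // subrr.
  have jar : (j < a + r)%N by lia.
  by rewrite (Ia j fj a jar) (Mbelow a ai) mulr0 subr0.
rewrite big_pred0 ?subr0; last by move=> i; exact/negbTE/nc.
have [lt|ge] := ltnP j (a + r); first exact: Ia.
apply/eqP; apply: contraT => Maj.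
have cand : isa_cand r M mk a j by rewrite /isa_cand on_diagE Maj fj andbT; apply/eqP; lia.
case: (boolP (row_has_pivot mk a)) => rp.
  by move: (nc a); rewrite /isa_cob cand rp.
by move: (np a); rewrite /isa_primary cand rp.
Qed.


Lemma inv_step_gen r M mk (T : 'M[F]_m) (Prim : 'I_m -> 'I_m -> bool) :
  (0 < r)%N -> Inv M mk r -> utri T ->
  (forall i j, Prim i j -> [/\ (i + r)%N = j, M i j != 0 & col_free mk j]) ->
  (forall i j, Prim i j -> ~~ row_has_pivot mk i) ->
  (forall j : 'I_m, col_free mk j -> (forall i, ~~ Prim i j) ->
      forall a : 'I_m, (j < a + r.+1)%N -> (M *m T) a j = 0) ->
  (forall i p : 'I_m, (mk i p != 0%N) || Prim i p ->
      forall a : 'I_m, (i <= a)%N -> (M *m T) a p = M a p) ->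
  Inv (invmx T *m M *m T)
      (fun i j => if mk i j != 0%N then mk i j else if Prim i j then r else 0%N) r.+1.
Proof.
move=> r0 I uT Pf Pr Nfree Nkeep; have I' := I; case: I' => Ia Ib Ic Ir Icl.
split.
- move=> j fj' a ja; have [fj np] := col_free_step r0 fj'.
  apply: (@conj_zero T M j (j - r) uT) => [b jb|]; last by lia.
  by apply: Nfree => //; lia.
- move=> i p; rewrite mk_step_nz // => h.
  have below : forall a : 'I_m, (i < a)%N -> M a p = 0.
    case/orP: h => [old|/andP[_ pr]]; first exact: (Ib _ _ old).2.
    have [d _ fp] := Pf _ _ pr; move=> a ia; apply: Ia => //; lia.
  have nz : M i p != 0.
    by case/orP: h => [old|/andP[_ pr]]; [exact: (Ib _ _ old).1 | have [] := Pf _ _ pr].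
  have h2 : (mk i p != 0%N) || Prim i p by case/orP: h => [->|/andP[_ ->]]; rewrite ?orbT.
  have K := conj_keep uT (Nkeep i p h2) below.
  split; first by rewrite K.
  by move=> a ia; rewrite K ?below // ltnW.
- move=> i p; case: (mk i p =P 0%N) => [mz|/eqP nz] /=.
    case pr: (Prim i p) => // _; have [d _ _] := Pf _ _ pr; split=> //; lia.
  by move=> _; have [e /andP[l1 l2]] := Ic _ _ nz; split=> //; rewrite l1 /=; lia.
- move=> i p q; case: (mk i p =P 0%N) => [mp|/eqP np] /=;
    case: (mk i q =P 0%N) => [mq|/eqP nq] /=.
  + case pp: (Prim i p) => // _; case pq: (Prim i q) => // _.
    have [d1 _ _] := Pf _ _ pp; have [d2 _ _] := Pf _ _ pq; apply: val_inj => /=; lia.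
  + case pp: (Prim i p) => // _ _; by move: (Pr _ _ pp); rewrite (row_has_pivotP nq).
  + move=> _; case pq: (Prim i q) => // _; by move: (Pr _ _ pq); rewrite (row_has_pivotP np).
  + by move=> _ _; exact: Ir np nq.
- move=> i i' p; case: (mk i p =P 0%N) => [mp|/eqP np] /=;
    case: (mk i' p =P 0%N) => [mq|/eqP nq] /=.
  + case pp: (Prim i p) => // _; case pq: (Prim i' p) => // _.
    have [d1 _ _] := Pf _ _ pp; have [d2 _ _] := Pf _ _ pq; apply: val_inj => /=; lia.
  + case pp: (Prim i p) => // _ _; have [_ _ /col_freeP] := Pf _ _ pp.
    by move=> /(_ i') mq'; rewrite mq' in nq.
  + move=> _; case pq: (Prim i' p) => // _; have [_ _ /col_freeP] := Pf _ _ pq.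
    by move=> /(_ i) mp'; rewrite mp' in np.
  + by move=> _ _; exact: Icl np nq.
Qed.


Lemma isa_prim_facts r M mk i j : isa_primary r M mk i j ->
  [/\ (i + r)%N = j, M i j != 0 & col_free mk j] /\ ~~ row_has_pivot mk i.
Proof. by case/andP=> /and3P[/eqP d nz cf] rp. Qed.

Lemma isa_inv r M mk : (0 < r)%N -> Inv M mk r ->
  Inv (isa_step r (M, mk)).1 (isa_step r (M, mk)).2 r.+1.
Proof.
move=> r0 I; apply: inv_step_gen => //.
- exact: isaT_utri.
- by move=> i j /isa_prim_facts[].
- by move=> i j /isa_prim_facts[].
- move=> j fj np a ja; exact: isa_N_free.
move=> i p h a _; rewrite isa_NE big_pred0 ?subr0 // => i'.
apply/negbTE/negP => ci; have [d _ _ fp _] := cob_facts I ci.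
case/orP: h => [nz|pr].
  by move/col_freeP: fp => /(_ i) z; rewrite z in nz.
have [[d' _ _] nrp] := isa_prim_facts pr.
have ii : i' = i by apply: val_inj => /=; lia.
by move: ci; rewrite ii /isa_cob (negbTE nrp) andbF.
Qed.


Definition gq r M mk (j q : 'I_m) : F :=
  \sum_(i | rca_primary r M mk i j) (if (j < q)%N then M i q / M i j else 0).

Lemma Tcol_entry r M mk (j k q : 'I_m) :
  rca_Tcol r M mk j k q = (k == q)%:R - (k == j)%:R * gq r M mk j q.
Proof.
rewrite /rca_Tcol !mxE summxE /gq mulr_sumr; congr (_ - _); apply: eq_bigr => i _.
rewrite summxE (eq_bigr (fun q' => (M i q' / M i j) * ((k == j) && (q == q'))%:R)).
  by rewrite sumd2; case: ifP; rewrite ?mulr0 // mulrC.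
by move=> q' _; rewrite !mxE.
Qed.

Lemma Tcol_utri r M mk j : utri (rca_Tcol r M mk j).
Proof.
split=> [a|a b ba]; rewrite Tcol_entry.
  rewrite eqxx; case: (a =P j) => [->|/eqP ne]; last by rewrite ?(negbTE ne) mul0r subr0.
  by rewrite /gq big1 ?mulr0 ?subr0 // => i _; rewrite ltnn.
rewrite ordgtF // sub0r; case: (a =P j) => [aj|/eqP ne]; last by rewrite ?(negbTE ne) mul0r oppr0.
rewrite /gq big1 ?mulr0 ?oppr0 // => i _; rewrite -aj ltnNge ltnW //.
Qed.

Lemma Tcol_row r M mk (j a b : 'I_m) : a != j -> rca_Tcol r M mk j a b = (a == b)%:R.
Proof. by move=> ne; rewrite Tcol_entry (negbTE ne) mul0r subr0. Qed.

Lemma mul_Tcol r M mk (Z : 'M[F]_m) (j x q : 'I_m) :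
  (Z *m rca_Tcol r M mk j) x q = Z x q - Z x j * gq r M mk j q.
Proof.
rewrite mxE (eq_bigr (fun k => Z x k * (k == q)%:R - Z x k * (k == j)%:R * gq r M mk j q)).
  by rewrite sumrB sumd1 -mulr_suml sumd1.
by move=> k _; rewrite Tcol_entry mulrBr mulrA.
Qed.

Definition Jc r M mk (k : 'I_m) := [exists i, rca_primary r M mk i k].

Lemma rca_prim_facts r M mk i j : rca_primary r M mk i j ->
  [/\ (i + r)%N = j, M i j != 0 & col_free mk j].
Proof. by case/and3P=> /eqP d nz cf. Qed.

Lemma rca_prim_unique r M mk i i' j : rca_primary r M mk i j -> rca_primary r M mk i' j -> i' = i.
Proof.
move=> /rca_prim_facts[d1 _ _] /rca_prim_facts[d2 _ _]; apply: val_inj => /=; lia.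
Qed.

Lemma gq_prim r M mk i j (q : 'I_m) : rca_primary r M mk i j -> (j < q)%N -> gq r M mk j q = M i q / M i j.
Proof.
move=> pr jq; rewrite /gq (@sum_unique (fun i => rca_primary r M mk i j) _ _ pr).
  by rewrite jq.
by move=> i' pr'; apply: rca_prim_unique pr pr'.
Qed.

Lemma rcaT_utri r M mk : utri (rca_T r M mk).
Proof.
apply: big_ind => //; last by move=> j _; apply: Tcol_utri.
  by split=> [a|a b ba]; rewrite mxE ?eqxx // ordgtF.
exact: utri_mul.
Qed.

Lemma sumd1l (G : 'I_m -> F) (p : 'I_m) : \sum_k (p == k)%:R * G k = G p.
Proof.
rewrite (bigD1 p) //= eqxx mul1r big1 ?addr0 // => k kp.
by rewrite eq_sym (negPf kp) mul0r.
Qed.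

Lemma rcaT_rows r M mk (a : 'I_m) : ~~ Jc r M mk a ->
  forall b, rca_T r M mk a b = (a == b)%:R.
Proof.
move=> nJ; rewrite /rca_T.
apply: (big_ind (fun X : 'M[F]_m => forall b, X a b = (a == b)%:R)).
- by move=> b; rewrite mxE.
- by move=> X Y hX hY b; rewrite mxE (eq_bigr (fun k => (a == k)%:R * Y k b)) ?sumd1l //
     => k _; rewrite hX.
- move=> j Jj b; apply: Tcol_row; apply/eqP => aj; by move: nJ; rewrite aj /Jc Jj.
Qed.


Lemma prod_rows_id r M mk (s : seq 'I_m) (k : 'I_m) :
  all (fun j : 'I_m => (k < j)%N) s ->
  forall a : 'I_m, (a <= k)%N -> forall b,
  (\big[mulmx/1%:M]_(j <- s | Jc r M mk j) rca_Tcol r M mk j) a b = (a == b)%:R.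
Proof.
move=> /allP As a ak; rewrite big_seq_cond.
apply: (big_ind (fun X : 'M[F]_m => forall b, X a b = (a == b)%:R)).
- by move=> b; rewrite mxE.
- by move=> X Y hX hY b; rewrite mxE (eq_bigr (fun c => (a == c)%:R * Y c b)) ?sumd1l //
     => c _; rewrite hX.
- move=> j /andP[js _] b; apply: Tcol_row; apply/eqP => aj.
  by move: (As j js); rewrite -aj ltnNge ak.
Qed.

Lemma T3_seq r M mk (s : seq 'I_m) : Inv M mk r ->
  sorted (fun a b : 'I_m => (a < b)%N) s ->
  forall Z : 'M[F]_m,
  (forall (j i b : 'I_m), j \in s -> rca_primary r M mk i j -> Z i b = M i b) ->
  forall (j i : 'I_m), j \in s -> rca_primary r M mk i j -> forall q : 'I_m, (j < q)%N ->
  (Z *m \big[mulmx/1%:M]_(k <- s | Jc r M mk k) rca_Tcol r M mk k) i q = 0.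
Proof.
move=> I; have I' := I; case: I' => Ia _ _ _ _.
elim: s => [|k s IH] // srt Z hZ j i js pr q jq.
have tr : transitive (fun a b : 'I_m => (a < b)%N) by move=> x y z; apply: ltn_trans.
move: srt => /= srt; move: srt; rewrite (path_sortedE tr) => /andP[allk srt].
rewrite big_cons; case Jk: (Jc r M mk k); last first.
  have js' : j \in s.
    move: js; rewrite inE => /orP[/eqP jk|] //.
    by move: Jk; rewrite /Jc -jk => /existsPn /(_ i); rewrite pr.
  by apply: (IH srt Z _ j i js' pr q jq) => j' i' b j's; apply: hZ; rewrite inE j's orbT.
rewrite /= mulmxA.
move: js; rewrite inE => /orP[/eqP jk|js].
  rewrite jk in pr jq.
  have [d Mik fk] := rca_prim_facts pr.
  set W := Z *m rca_Tcol r M mk k.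
  have Wz : forall c : 'I_m, (k < c)%N -> W i c = 0.
    move=> c kc; rewrite mul_Tcol (gq_prim pr kc) !(hZ k) ?mem_head //.
    by rewrite mulrC divfK // subrr.
  rewrite mxE big1 // => c _.
  have [kc|ck] := ltnP k c; first by rewrite Wz ?mul0r.
  rewrite (@prod_rows_id r M mk s k allk c ck) ordltF ?mulr0 //.
  exact: leq_ltn_trans ck jq.
apply: (IH srt (Z *m rca_Tcol r M mk k) _ j i js pr q jq) => j' i' b j's pr'.
have [kj'] : (k < j')%N by move/allP: allk => /(_ j' j's).
rewrite mul_Tcol (hZ j') ?inE ?j's ?orbT //.
have [d' _ _] := rca_prim_facts pr'.
move: Jk => /existsP [i'' prk]; have [_ _ fk] := rca_prim_facts prk.
rewrite (hZ j') ?inE ?j's ?orbT // (Ia k fk i') ?mul0r ?subr0 //; lia.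
Qed.


Lemma index_enum_sorted : sorted (fun a b : 'I_m => (a < b)%N) (index_enum 'I_m).
Proof.
have E : map val (index_enum 'I_m) = iota 0 m.
  have := deprecated_filter_index_enum (T:='I_m) predT; rewrite filter_predT => ->.
  exact: val_enum_ord.
have := iota_ltn_sorted 0 m; rewrite -E sorted_map; by [].
Qed.

Lemma rcaT_clear r M mk i j : Inv M mk r -> rca_primary r M mk i j ->
  forall q : 'I_m, (j < q)%N -> (M *m rca_T r M mk) i q = 0.
Proof.
move=> I pr q jq; apply: (@T3_seq r M mk _ I index_enum_sorted M _ j i _ pr q jq) => //.
exact: mem_index_enum.
Qed.


Definition Dstar M mk := forall i p : 'I_m, mk i p != 0%N ->
  exists v : 'rV[F]_m, [/\ v 0 i = 1, (forall a : 'I_m, (a < i)%N -> v 0 a = 0) &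
     (forall q, col_free mk q -> (v *m M) 0 q = 0)].

Lemma Dstar_d r M mk (i p q : 'I_m) : Inv M mk r -> Dstar M mk -> mk i p != 0%N ->
  col_free mk q -> (q <= i + r)%N -> M i q = 0.
Proof.
move=> [Ia _ _ _ _] Ds nz fq qi; have [v [v1 v0 vM]] := Ds i p nz.
have := vM q fq; rewrite mxE (bigD1 i) //= v1 mul1r big1 ?addr0 // => k ki.
have [lt|gt] := ltnP k i; first by rewrite v0 ?mul0r.
rewrite (Ia q fq k) ?mulr0 //.
have : (i < k)%N by rewrite ltn_neqAle gt andbT eq_sym; exact: ki.
lia.
Qed.

Lemma rca_N_eq r M mk (a b : 'I_m) :
  (forall k : 'I_m, (k < b)%N -> Jc r M mk k -> M a k = 0) ->
  (M *m rca_T r M mk) a b = M a b.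
Proof.
move=> H; rewrite (@mulmx_utri_r _ _ _ M (rca_T r M mk) a b (@rcaT_utri r M mk)) big1 ?addr0 // => k kb.
case Jk: (Jc r M mk k); first by rewrite H ?mul0r.
by rewrite rcaT_rows ?Jk // ordltF ?mulr0.
Qed.

Lemma Jc_free r M mk k : Jc r M mk k -> col_free mk k.
Proof. by case/existsP=> i /rca_prim_facts[]. Qed.

Lemma rca_inv r M mk : (0 < r)%N -> Inv M mk r -> Dstar M mk ->
  Inv (rca_step r (M, mk)).1 (rca_step r (M, mk)).2 r.+1.
Proof.
move=> r0 I Ds; have I' := I; case: I' => Ia Ib Ic Ir Icl.
apply: inv_step_gen => //.
- exact: rcaT_utri.
- by move=> i j /rca_prim_facts.
- move=> i j pr; apply/negP => rp; have [d nz fj] := rca_prim_facts pr.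
  by move: nz; rewrite (Dstar_d I Ds (pc_spec rp) fj) ?eqxx // d.
- move=> j fj np a ja; rewrite rca_N_eq.
    have [lt|ge] := ltnP j (a + r); first exact: Ia.
    apply/eqP; apply: contraT => Maj.
    have e : (a + r == j)%N by apply/eqP; lia.
    by move: (np a); rewrite /rca_primary on_diagE e Maj fj.
  move=> k kj Jk; apply: (Ia k (Jc_free Jk)); lia.
move=> i p h a ia; rewrite rca_N_eq // => k kp Jk; apply: (Ia k (Jc_free Jk)).
have : (p <= i + r)%N.
  case/orP: h => [nz|pr]; first by have [e /andP[_ lt]] := Ic _ _ nz; lia.
  by have [d _ _] := rca_prim_facts pr; lia.
lia.
Qed.

Lemma rca_dstar r M mk : (0 < r)%N -> Inv M mk r -> Dstar M mk ->
  Dstar (rca_step r (M, mk)).1 (rca_step r (M, mk)).2.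
Proof.
move=> r0 I Ds; have I' := I; case: I' => Ia Ib Ic Ir Icl.
rewrite /Dstar /= => i p; set T := rca_T r M mk.
have uT : utri T by apply: rcaT_utri.
have TU := utri_unit uT.
rewrite mk_step_nz // => /orP[old|/andP[/eqP mz pr]].
  have [v [v1 v0 vM]] := Ds i p old.
  exists (v *m T); split.
  - by rewrite mulmx_utri_r // v1 big1 ?addr0 // => k ki; rewrite v0 ?mul0r.
  - move=> a ai; rewrite mulmx_utri_r // v0 // add0r big1 // => k ka.
    by rewrite v0 ?mul0r // (ltn_trans ka ai).
  move=> q fq'; have [fq _] := col_free_step r0 fq'.
  rewrite !mulmxA mulmxK // mulmx_utri_r // vM // add0r big1 // => k kq.
  case Jk: (Jc r M mk k); first by rewrite (vM k (Jc_free Jk)) mul0r.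
  by rewrite rcaT_rows ?Jk // ordltF ?mulr0.
exists (row i T); split.
- by rewrite mxE; case: uT.
- by move=> a ai; rewrite mxE; case: uT => _ ->.
move=> q fq'; have [fq np] := col_free_step r0 fq'.
rewrite -row_mul !mulmxA mulmxV // mul1mx mxE.
have [d nz fp] := rca_prim_facts pr.
have [pq|qp] := boolP (p < q)%N; first exact: (rcaT_clear I pr pq).
have qp' : (q < p)%N.
  rewrite ltn_neqAle leqNgt qp andbT; apply/eqP => e.
  have qpE : q = p by apply: val_inj.
  by move: pr (np i); rewrite -qpE => ->.
rewrite rca_N_eq; first by apply: Ia => //; lia.
move=> k kq Jk; apply: (Ia k (Jc_free Jk)); lia.
Qed.

Lemma track (S T M D : 'M[F]_m) : utri S -> S *m M = D *m S -> utri T ->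
  utri (S *m T) /\ (S *m T) *m (invmx T *m M *m T) = D *m (S *m T).
Proof.
move=> uS E uT; split; first exact: utri_mul.
by rewrite !mulmxA -[S *m T *m invmx T]mulmxA mulmxV ?utri_unit // mulmx1 E.
Qed.

End Algo.



Section Main.
Variables (F : fieldType) (m : nat).

Lemma corner_app (M1 M2 A : 'M[F]_m) (mk1 mk2 : marking m) r (i0 j0 : 'I_m) :
  Inv M1 mk1 r -> Inv M2 mk2 r -> (forall i j, mk1 i j = mk2 i j) ->
  utri A -> M2 *m A = A *m M1 -> (j0 <= i0 + r)%N ->
  (forall p, mk1 i0 p != 0%N -> p = j0) -> (col_free mk1 j0 \/ mk1 i0 j0 != 0%N) ->
  M1 i0 j0 = M2 i0 j0.
Proof.
move=> I1 I2 E uA MA jr hrow hcol.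
have cfE : forall j, col_free mk1 j = col_free mk2 j.
  by move=> j; apply: eq_forallb => i; rewrite E.
apply: (corner_eq uA MA).
- exact: Inv_distinct I1 jr hrow.
- by apply: (Inv_distinct I2 jr) => p; rewrite -E; apply: hrow.
- exact: Inv_below I1 jr hcol.
Qed.

Lemma conn_upper b (D : 'M[F]_m) (part : 'I_m -> 'I_b.+1) :
  is_connection_matrix D part -> forall a j : 'I_m, (j < a + 1)%N -> D a j = 0.
Proof.
case=> _ _ _ H a j ja; apply/eqP; apply: contraT => nz.
have [aj _] := H a j nz; lia.
Qed.

Definition St (D : 'M[F]_m) n :=
  let: (M1, mk1) := isa D n in let: (M2, mk2) := rca D n in
  [/\ Inv M1 mk1 n.+1, Inv M2 mk2 n.+1, Dstar M2 mk2, (forall i j, mk1 i j = mk2 i j) &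
      exists S1 S2 : 'M[F]_m, [/\ utri S1, S1 *m M1 = D *m S1, utri S2 & S2 *m M2 = D *m S2]].

Lemma conj_rel (D M1 M2 S1 S2 : 'M[F]_m) : utri S1 -> S1 *m M1 = D *m S1 ->
  utri S2 -> S2 *m M2 = D *m S2 ->
  utri (invmx S2 *m S1) /\ M2 *m (invmx S2 *m S1) = (invmx S2 *m S1) *m M1.
Proof.
move=> u1 E1 u2 E2; split; first by apply: utri_mul => //; apply: utri_inv.
have U2 := utri_unit u2.
rewrite -mulmxA E1 !mulmxA; congr (_ *m _).
by rewrite -{1}(mulKmx U2 M2) E2 !mulmxA mulmxK.
Qed.


Lemma prim_eq (D M1 M2 S1 S2 : 'M[F]_m) (mk1 mk2 : marking m) r :
  Inv M1 mk1 r -> Inv M2 mk2 r -> Dstar M2 mk2 -> (forall i j, mk1 i j = mk2 i j) ->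
  utri S1 -> S1 *m M1 = D *m S1 -> utri S2 -> S2 *m M2 = D *m S2 ->
  forall i j, isa_primary r M1 mk1 i j = rca_primary r M2 mk2 i j.
Proof.
move=> I1 I2 Ds E u1 E1 u2 E2 i j.
have [uA MA] := conj_rel u1 E1 u2 E2.
have cfE : col_free mk1 j = col_free mk2 j by apply: eq_forallb => i'; rewrite E.
rewrite /isa_primary /isa_cand /rca_primary -cfE.
case d: (on_diag r i j) => //=; case cf: (col_free mk1 j); rewrite ?andbF //=.
have jr : (j <= i + r)%N by move: d; rewrite on_diagE => /eqP <-.
case: (boolP (row_has_pivot mk1 i)) => rp /=.
  have hp := pc_spec rp; rewrite E in hp.
  have cf2 : col_free mk2 j by rewrite -cfE.
  by rewrite (Dstar_d I2 Ds hp cf2 jr) eqxx andbF.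
rewrite andbT (corner_app I1 I2 E uA MA jr) //.
  by move=> p hp; move: rp; rewrite (row_has_pivotP hp).
by left.
Qed.

Lemma St_ind b (D : 'M[F]_m) (part : 'I_m -> 'I_b.+1) :
  is_connection_matrix D part -> forall n, St D n.
Proof.
move=> cm; elim=> [|n IH].
  have I0 : Inv D (@no_marks m) 1.
    split; rewrite /no_marks //.
    by move=> j _ a ja; apply: (conn_upper cm).
  rewrite /St /=; split => //.
  - exists 1%:M, 1%:M; rewrite mul1mx mulmx1; split=> //;
      by split=> [a|a b' ba]; rewrite mxE ?eqxx // ordgtF.
move: IH; rewrite /St /=.
case: (isa D n) => M1 mk1; case: (rca D n) => M2 mk2.
move=> [I1 I2 Ds E [S1 [S2 [u1 E1 u2 E2]]]].
have r0 : (0 < n.+1)%N by [].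
have PE := prim_eq I1 I2 Ds E u1 E1 u2 E2.
split.
- exact: isa_inv.
- exact: rca_inv.
- exact: rca_dstar.
- by move=> i j /=; rewrite E PE.
- have [uS1 ES1] := track u1 E1 (isaT_utri I1).
  have [uS2 ES2] := track u2 E2 (@rcaT_utri _ _ n.+1 M2 mk2).
  by exists (S1 *m isa_T n.+1 M1 mk1), (S2 *m rca_T n.+1 M2 mk2).
Qed.

End Main.

Unset Implicit Arguments. Set Strict Implicit. Set Printing Implicit Defensive.

Theorem mainTheorem15 (F : fieldType) (m b : nat) (D : 'M[F]_m)
    (part : 'I_m -> 'I_b.+1) :
  is_connection_matrix D part ->
  forall r : nat, (1 <= r <= m - 1)%N ->
    (forall i j : 'I_m,
        (isa_marks D r i j == r) = (rca_marks D r i j == r)) /\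
    (forall i j : 'I_m, isa_marks D r i j != 0%N ->
        isa_mx D r i j = rca_mx D r i j).
Proof.
move=> cm [//|n] hr.
move: (St_ind cm n); rewrite /St /isa_marks /rca_marks /isa_mx /rca_mx /=.
case: (isa D n) => M1 mk1; case: (rca D n) => M2 mk2.
move=> [I1 I2 Ds E [S1 [S2 [u1 E1 u2 E2]]]].
have PE := prim_eq I1 I2 Ds E u1 E1 u2 E2.
have [uA MA] := conj_rel u1 E1 u2 E2.
split.
  by move=> i j /=; rewrite E PE.
move=> i j /=; rewrite mk_step_nz // => /orP[old|/andP[_ pr]].
  have I1' := I1; case: I1' => _ _ Ic Ir _.
  apply: (corner_app I1 I2 E uA MA) => //.
  - by have [e /andP[_ lt]] := Ic _ _ old; rewrite -e leq_add2l ltnW.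
  - by move=> p hp; apply: Ir hp old.
  - by right.
have [[d nz cf] nrp] := isa_prim_facts pr.
apply: (corner_app I1 I2 E uA MA) => //.
- by rewrite d.
- by move=> p hp; move: nrp; rewrite (row_has_pivotP hp).
- by left.
Qed.
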